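(* Let $n,k\ge 1$, let $f\in\mathcal{B}_c$, and let $X=(X_1,\dots,X_n)$ be a random vector in $\mathbb{R}^n$ (the $X_i$ possibly dependent) such that $P(|X_i|\ge u)\le f(u)$ for all $u\ge 0$ and all $i$. Let $g(x)=\sum_{i=1}^m a_i\,\mu_i(x)+C$, where $C\in\mathbb{R}$ and $\sum_i a_i\mu_i$ is a (nonzero) homogeneous polynomial of degree $k$ in $x_1,\dots,x_n$ written with distinct monomials $\mu_i$ and coefficients $a_i$. Then for all $t\ge C$, $$P(g(X)\ge t)\le n\, f\!\left(\frac{(t-C)^{1/k}}{\left(\sum_i |a_i|\right)^{1/k}}\right).$$
   Context: $\mathcal{B}_c$ is the set of functions $f:[0,\infty)\to(0,\infty)$ that are continuous, strictly decreasing, satisfy $f(0)\ge 1$ and $\lim_{u\to\infty}f(u)=0$. *)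

(* Defs.v *)
From HB Require Import structures.
From mathcomp Require Import all_boot all_order all_algebra.
From mathcomp Require Import all_classical all_reals all_analysis.
Set Implicit Arguments. Unset Strict Implicit. Unset Printing Implicit Defensive.
Import Order.TTheory GRing.Theory Num.Theory.
Import numFieldNormedType.Exports.
Local Open Scope classical_set_scope.
Local Open Scope ring_scope.

(* The class B_c: f : [0,oo) -> (0,oo) continuous, strictly decreasing,
   f 0 >= 1, f u -> 0 as u -> +oo.  (f is given as a function on R; only
   its restriction to [0,oo) matters.) *)
Definition Bc (R : realType) (f : R -> R) : Prop :=
  [/\ {within [set u : R | 0 <= u], continuous f},
      (forall u v : R, 0 <= u -> u < v -> f v < f u),
      (forall u : R, 0 <= u -> 0 < f u),
      1 <= f 0 &
      f u @[u --> +oo] --> 0].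

Definition monomial (R : realType) (n : nat) (e : {ffun 'I_n -> nat})
  (x : 'I_n -> R) : R := \prod_(j < n) x j ^+ e j.

Definition polyg (R : realType) (n m : nat) (a : 'I_m -> R)
  (e : 'I_m -> {ffun 'I_n -> nat}) (C : R) (x : 'I_n -> R) : R :=
  \sum_(i < m) a i * monomial (e i) x + C.

(* Main.v *)
Require Import Defs.
From HB Require Import structures.
From mathcomp Require Import all_boot all_order all_algebra.
From mathcomp Require Import all_classical all_reals all_analysis.
Import Order.TTheory GRing.Theory Num.Theory.
Import numFieldNormedType.Exports.
Local Open Scope classical_set_scope.
Local Open Scope ring_scope.

Lemma upow (R : realType) (y : R) (k : nat) : (0 < k)%N -> 0 <= y ->
  (y `^ (k%:R^-1)) ^+ k = y.
Proof.
move=> k0 y0.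
rewrite -powR_mulrn ?powR_ge0// -powRrM mulVf ?powRr1//.
by rewrite pnatr_eq0 -lt0n.
Qed.

Lemma det (R : realType) (n k m : nat) (a : 'I_m -> R)
  (e : 'I_m -> {ffun 'I_n -> nat}) (C t : R) (x : 'I_n -> R) :
  (0 < n)%N -> (0 < k)%N -> 0 < \sum_(i < m) `|a i| ->
  (forall i, (\sum_(j < n) e i j)%N = k) -> C <= t ->
  t <= polyg a e C x ->
  exists j, (t - C) `^ (k%:R^-1) / (\sum_(i < m) `|a i|) `^ (k%:R^-1) <= `|x j|.
Proof.
move=> n0 k0 S0 he tC tg.
set S := \sum_(i < m) `|a i|.
set u := _ / _.
apply/not_existsP => /(_ _) /negP; rewrite -/u => H.
have H' : forall j, `|x j| < u by move=> j; rewrite ltNge; exact: H.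
have u0 : 0 < u by apply: le_lt_trans (H' (Ordinal n0)).
set s := \big[Order.max/0]_(j < n) `|x j|.
have xs : forall j, `|x j| <= s by move=> j; apply: le_bigmax.
have s0 : 0 <= s by apply: le_trans (xs (Ordinal n0)).
have su : s < u by apply: bigmax_lt.
have uk : u ^+ k = (t - C) / S.
  have S0' := ltW S0; have tC' : 0 <= t - C by rewrite subr_ge0.
  by rewrite /u exprMn exprVn !upow.
have hm : forall i, `|monomial (e i) x| <= s ^+ k.
  move=> i; rewrite /monomial normr_prod -(he i) -prodrXr.
  apply: ler_prod => j _; rewrite normr_ge0 normrX /=.
  by apply: lerXn2r; rewrite ?nnegrE.
have : polyg a e C x - C <= S * s ^+ k.
  rewrite /polyg addrK /S mulr_suml; apply: ler_sum => i _.
  apply: le_trans (ler_norm _) _; rewrite normrM.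
  by apply: ler_wpM2l.
have : S * s ^+ k < t - C.
  have -> : t - C = S * u ^+ k by rewrite uk mulrC divfK ?gt_eqF.
  by rewrite ltr_pM2l // ltrXn2r // -lt0n.
move=> h1 h2; have := lt_le_trans (le_lt_trans h2 h1) (lexx _).
by rewrite ltrBlDr subrK ltNge tg.
Qed.

Lemma mset d (T : measurableType d) (R : realType) (h : T -> R) (c : R) :
  measurable_fun setT h -> measurable [set w | c <= h w].
Proof.
move=> mh; have := mh measurableT _ (measurable_itv `[c, +oo[).
rewrite setTI; congr measurable; apply/seteqP; split => w /=;
  by rewrite in_itv /= andbT.
Qed.

Theorem corollary3 (d : measure_display) (T : measurableType d) (R : realType)
  (P : probability T R) (n k : nat) (f : R -> R)
  (X : 'I_n -> T -> R) (m : nat) (a : 'I_m -> R)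
  (e : 'I_m -> {ffun 'I_n -> nat}) (C : R) :
  (0 < n)%N -> (0 < k)%N -> Bc f ->
  (forall i, measurable_fun setT (X i)) ->
  (forall i (u : R), 0 <= u -> (P [set w | (u <= `|X i w|)%R] <= (f u)%:E)%E) ->
  injective e ->
  (forall i, (\sum_(j < n) e i j)%N = k) ->
  (exists i, a i != 0) ->
  forall t : R, C <= t ->
  (P [set w | (t <= polyg a e C (fun j => X j w))%R]
    <= (n%:R * f ((t - C) `^ (k%:R^-1) / (\sum_(i < m) `|a i|) `^ (k%:R^-1)))%:E)%E.
Proof.
move=> n0 k0 _ mX hX _ he [i0 ai0] t tC.
case: n X mX hX e he n0 => // n' X mX hX e he _.
have S0 : 0 < \sum_(i < m) `|a i|.
  have h0 : 0 < `|a i0| by rewrite normr_gt0.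
  apply: lt_le_trans h0 _; rewrite (bigD1 i0) //= lerDl.
  by apply: sumr_ge0 => i _.
set u := _ / _.
have u0 : 0 <= u by rewrite divr_ge0 // powR_ge0.
have mg : measurable_fun setT (fun w => polyg a e C (fun j => X j w)).
  rewrite /polyg /monomial.
  apply: (measurable_realfun.measurable_funD (f := fun w => \sum_(i < m) a i * \prod_(j < n'.+1) X j w ^+ e i j) (g := fun=> C)); last exact: measurable_cst.
  apply: measurable_sum => i.
  apply: (measurable_realfun.measurable_funM (f := fun=> a i)); first exact: measurable_cst.
  apply: measurable_prod => j _; exact: measurable_realfun.measurable_funX.
pose F (i : nat) := [set w | u <= `|X (inord i) w|].
have mF : forall i, measurable (F i).
  move=> i; apply: mset; apply: measurableT_comp => //.
have le1 : (P [set w | (t <= polyg a e C (fun j => X j w))%R]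
    <= \sum_(i < n'.+1) P (F i))%E.
  apply: content_subadditive => //; first exact: mset.
  move=> w /= /(@det R _ _ _ a e C t _ (ltn0Sn n') k0 S0 he tC) [j hj].
  rewrite -bigcup_mkord; exists j => //=; rewrite /F /= inord_val; exact: hj.
apply: (le_trans le1).
apply: le_trans.
  apply: lee_sum => i _; exact: hX.
by rewrite sumEFin big_const_ord iter_addr addr0 mulr_natl.
Qed.
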